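(* Let $\{a_n\}_{n=1}^\infty\subset(0,1]$ and define $P_n,Q_n:\{-1,1\}^n\to\mathbb{R}$ by $P_0\equiv Q_0\equiv 1$ and \[ P_{n+1}=P_n+\varepsilon_{n+1}a_{n+1}Q_n,\qquad Q_{n+1}=\varepsilon_{n+1}a_{n+1}P_n-Q_n,\qquad n=0,1,\dots \] Then for each $n=1,2,\dots$, \[ I(P_n)=I(Q_n)=\sum_{i=1}^n a_i^2\prod_{1\le j\le n,\ j\ne i}(1+a_j^2). \]
   Context: Here $\varepsilon_i$ denotes the $i$-th coordinate function $\varepsilon_i(\delta_1,\dots,\delta_m)=\delta_i$ on $\{-1,1\}^m$ for $m\ge i$ (functions on $\{-1,1\}^n$ are regarded as functions on $\{-1,1\}^{n+1}$ not depending on the last coordinate). For $A\subseteq[n]$, $W_A=\prod_{i\in A}\varepsilon_i$ and, for $g:\{-1,1\}^n\to\mathbb{R}$, $\hat g(A)=2^{-n}\sum_{\delta\in\{-1,1\}^n}g(\delta)W_A(\delta)$. The influence is $I(g)=\sum_{A\subseteq[n]}\hat g(A)^2|A|$. *)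

(* Defs.v *)
From mathcomp Require Import all_boot all_order all_algebra.
Set Implicit Arguments. Unset Strict Implicit. Unset Printing Implicit Defensive.
Import Order.TTheory GRing.Theory Num.Theory.
Local Open Scope ring_scope.

(* A point of {-1,1}^n is encoded as d : {ffun 'I_n -> bool}; coordinate i
   (0-based, i.e. the paper's coordinate i+1) equals -1 if d i = true and 1
   otherwise. *)
Definition sgn {R : pzRingType} (b : bool) : R := if b then -1 else 1.

(* Functions on {-1,1}^n regarded on all {-1,1}^m (m >= n): we represent them
   as functions of an infinite sign sequence e : nat -> R (e k = paper's
   epsilon_{k+1}), which depend only on the first n entries. *)
Definition ext {R : pzRingType} n (d : {ffun 'I_n -> bool}) : nat -> R :=
  fun k => match insub k with Some i => sgn (d i) | None => 1 end.

Definition walsh {R : pzRingType} n (A : {set 'I_n}) (d : {ffun 'I_n -> bool}) : R :=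
  \prod_(i in A) sgn (d i).

Definition fcoef {R : fieldType} n (g : (nat -> R) -> R) (A : {set 'I_n}) : R :=
  (2 ^+ n)^-1 * \sum_(d : {ffun 'I_n -> bool}) g (ext d) * walsh A d.

Definition influence {R : fieldType} n (g : (nat -> R) -> R) : R :=
  \sum_(A : {set 'I_n}) fcoef g A ^+ 2 * #|A|%:R.

(* P_n, Q_n: a i is the paper's a_i (i >= 1); e k is the paper's epsilon_{k+1}. *)
Fixpoint PQ {R : pzRingType} (a : nat -> R) (n : nat) (e : nat -> R) : R * R :=
  match n with
  | 0 => (1, 1)
  | m.+1 => let (p, q) := PQ a m e in
            (p + e m * a m.+1 * q, e m * a m.+1 * p - q)
  end.

Definition Pn {R : pzRingType} (a : nat -> R) n e := (PQ a n e).1.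
Definition Qn {R : pzRingType} (a : nat -> R) n e := (PQ a n e).2.

(* Main.v *)
Require Import Defs.
From mathcomp Require Import all_boot all_order all_algebra ring.
Set Implicit Arguments. Unset Strict Implicit. Unset Printing Implicit Defensive.
Import Order.TTheory GRing.Theory Num.Theory.
Local Open Scope ring_scope.

Section Aux.
Variable R : realFieldType.
Variable a : nat -> R.

Notation T n := {ffun 'I_n -> bool}.

Lemma PQ_ext n (e e' : nat -> R) : (forall k, (k < n)%N -> e k = e' k) ->
  PQ a n e = PQ a n e'.
Proof.
elim: n => [//|n IH] H /=.
rewrite IH; last by move=> k Hk; apply: H; apply: leqW.
by rewrite H.
Qed.

Lemma PnS n e : Pn a n.+1 e = Pn a n e + e n * a n.+1 * Qn a n e.
Proof. by rewrite /Pn /Qn /=; case: (PQ a n e). Qed.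
Lemma QnS n e : Qn a n.+1 e = e n * a n.+1 * Pn a n e - Qn a n e.
Proof. by rewrite /Pn /Qn /=; case: (PQ a n e). Qed.

Definition restrict n (d : T n.+1) : T n := [ffun j => d (lift ord_max j)].
Definition extF n (g : T n) (b : bool) : T n.+1 :=
  [ffun i => if unlift ord_max i is Some j then g j else b].

Lemma ext_restrict n (d : T n.+1) k : (k < n)%N ->
  ext (R:=R) d k = ext (restrict d) k.
Proof.
move=> Hk; rewrite /ext (insubT (fun k => k < n.+1)%N (leqW Hk)) (insubT (fun k => k < n)%N Hk).
rewrite ffunE; congr (sgn (d _)); apply: val_inj; by rewrite /= /bump leqNgt Hk.
Qed.

Lemma ext_max n (d : T n.+1) : ext (R:=R) d n = sgn (d ord_max).
Proof.
rewrite /ext (insubT (fun k => k < n.+1)%N (ltnSn n)); congr (sgn (d _)); exact: val_inj.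
Qed.

Lemma restrict_extF n (g : T n) b : restrict (extF g b) = g.
Proof. by apply/ffunP => j; rewrite !ffunE liftK. Qed.

Lemma extF_max n (g : T n) b : extF g b ord_max = b.
Proof. by rewrite ffunE unlift_none. Qed.

Lemma extF_restrict n (f : T n.+1) : extF (restrict f) (f ord_max) = f.
Proof.
apply/ffunP => i; rewrite ffunE; case: (unliftP ord_max i) => [j ->| ->] //.
by rewrite ffunE.
Qed.

Lemma sum_ffunS n (F : T n.+1 -> R) :
  \sum_(f : T n.+1) F f = \sum_(g : T n) \sum_(b : bool) F (extF g b).
Proof.
rewrite pair_big /=.
rewrite (reindex (fun p : T n * bool => extF p.1 p.2)) //=.
exists (fun f => (restrict f, f ord_max)) => [[g b] _|f _] /=.
  by rewrite restrict_extF extF_max.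
by rewrite extF_restrict.
Qed.

Definition mono n (f d : T n) : R :=
  \prod_(i < n) (if f i then a i.+1 * sgn (d i) else 1).

Lemma mono_extF n (g : T n) b (d : T n.+1) :
  mono (extF g b) d = mono g (restrict d) * (if b then a n.+1 * sgn (d ord_max) else 1).
Proof.
rewrite /mono big_ord_recr /= extF_max; congr (_ * _).
apply: eq_bigr => i _.
have -> : widen_ord (leqnSn n) i = lift ord_max i by apply: val_inj; by rewrite /= /bump leqNgt ltn_ord.
by rewrite !ffunE liftK.
Qed.


Lemma expand n : exists sP sQ : T n -> R,
  (forall f, sP f ^+ 2 = 1 /\ sQ f ^+ 2 = 1) /\
  forall d : T n, Pn a n (ext d) = \sum_f sP f * mono f d /\
                  Qn a n (ext d) = \sum_f sQ f * mono f d.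
Proof.
elim: n => [|n [sP [sQ [Hs He]]]].
  exists (fun _ => 1), (fun _ => 1); split => [f|d]; first by rewrite expr1n.
  have E : \sum_(f : T 0) 1 * mono f d = 1.
    under eq_bigr do rewrite /mono big_ord0 mulr1.
    by rewrite sumr_const card_ffun card_bool card_ord expn0.
  by rewrite E.
exists (fun f : T n.+1 => if f ord_max then sQ (restrict f) else sP (restrict f)).
exists (fun f : T n.+1 => if f ord_max then sP (restrict f) else - sQ (restrict f)).
split=> [f|d].
  by case: (f ord_max); have [h1 h2] := Hs (restrict f); rewrite ?sqrrN.
have Hr : forall k, (k < n)%N -> ext (R:=R) d k = ext (restrict d) k.
  by move=> k Hk; apply: ext_restrict.
have [HP HQ] := He (restrict d).
have E1 : Pn a n (ext d) = Pn a n (ext (restrict d)) by rewrite /Pn (PQ_ext Hr).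
have E2 : Qn a n (ext d) = Qn a n (ext (restrict d)) by rewrite /Qn (PQ_ext Hr).
rewrite PnS QnS E1 E2 HP HQ ext_max.
rewrite !sum_ffunS.
split.
  rewrite mulr_sumr -big_split /=; apply: eq_bigr => g _.
  rewrite big_bool /= !mono_extF !extF_max !restrict_extF.
  by rewrite mulr1; ring.
rewrite mulr_sumr -sumrN -big_split /=; apply: eq_bigr => g _.
rewrite big_bool /= !mono_extF !extF_max !restrict_extF.
by rewrite mulr1; ring.
Qed.
End Aux.

Section Aux2.
Variable R : realFieldType.
Variable a : nat -> R.
Notation T n := {ffun 'I_n -> bool}.

Lemma sum_mono_walsh n (f : T n) (A : {set 'I_n}) :
  \sum_(d : T n) mono a f d * walsh A d =
  if f == [ffun i => i \in A] then 2 ^+ n * \prod_(i < n) (if i \in A then a i.+1 else 1)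
  else 0.
Proof.
pose G (i : 'I_n) (c : bool) : R :=
  (if f i then a i.+1 * sgn c else 1) * (if i \in A then sgn c else 1).
have E : forall d : T n, mono a f d * walsh A d = \prod_i G i (d i).
  by move=> d; rewrite /mono /walsh (big_mkcond (fun i => i \in A)) -big_split.
under eq_bigr do rewrite E.
have D : \sum_(d : T n) \prod_i G i (d i) = \prod_i \sum_c G i c := esym (bigA_distr_bigA G).
rewrite D.
have EG : forall i, \sum_c G i c =
   if f i == (i \in A) then 2 * (if i \in A then a i.+1 else 1) else 0.
  move=> i; rewrite big_bool /G /sgn.
  by case: (f i); case: (i \in A) => /=; ring.
under eq_bigr do rewrite EG.
case: eqP => [->|Hne].
  rewrite (eq_bigr (fun i => 2 * (if i \in A then a i.+1 else 1))); last first.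
    by move=> i _; rewrite ffunE eqxx.
  by rewrite big_split /= prodr_const card_ord.
have : ~~ [forall i, f i == (i \in A)].
  apply/negP => /forallP H; apply: Hne; apply/ffunP => i; rewrite ffunE; exact/eqP.
rewrite negb_forall => /existsP [i Hi].
by rewrite (bigD1 i) //= (negbTE Hi) mul0r.
Qed.

Lemma fcoef_expand n (g : (nat -> R) -> R) (s : T n -> R)
  (H : forall d, g (ext d) = \sum_f s f * mono a f d) A :
  fcoef g A = s [ffun i => i \in A] * \prod_(i < n) (if i \in A then a i.+1 else 1).
Proof.
rewrite /fcoef.
under eq_bigr do rewrite H mulr_suml.
rewrite exchange_big /=.
under eq_bigr do (under eq_bigr do rewrite -mulrA; rewrite -mulr_sumr sum_mono_walsh).
rewrite (bigD1 [ffun i => i \in A]) //= eqxx [X in _ + X]big1 ?addr0; last first.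
  by move=> f /negbTE ->; rewrite mulr0.
rewrite mulrCA mulKf //.
by rewrite expf_neq0 // pnatr_eq0.
Qed.

Lemma sum_set_ffun n (F : {set 'I_n} -> R) :
  \sum_(A : {set 'I_n}) F A = \sum_(f : T n) F [set i | f i].
Proof.
rewrite (reindex (fun f : T n => [set i | f i])) //.
exists (fun A : {set 'I_n} => [ffun i => i \in A]) => [f _|A _].
  by apply/ffunP => i; rewrite ffunE inE.
by apply/setP => i; rewrite inE ffunE.
Qed.

Lemma infl_sum n (b : nat -> R) :
  \sum_(A : {set 'I_n}) \prod_(i < n) (if i \in A then b i.+1 else 1) * #|A|%:R =
  \sum_(k < n) b k.+1 * \prod_(i < n | i != k) (1 + b i.+1).
Proof.
have C : forall A : {set 'I_n}, #|A|%:R = \sum_(k < n) (if k \in A then 1 else 0) :> R.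
  by move=> A; rewrite -big_mkcond sumr_const.
under eq_bigr do rewrite C mulr_sumr.
rewrite exchange_big /=; apply: eq_bigr => k _.
rewrite sum_set_ffun.
pose G (i : 'I_n) (c : bool) : R :=
  (if c then b i.+1 else 1) * (if i == k then (if c then 1 else 0) else 1).
have E : forall f : T n, \prod_(i < n) (if i \in [set i | f i] then b i.+1 else 1) *
   (if k \in [set i | f i] then 1 else 0) = \prod_i G i (f i).
  move=> f; rewrite /G big_split /=; congr (_ * _).
    by apply: eq_bigr => i _; rewrite inE.
  by rewrite (bigD1 k) //= eqxx big1 ?mulr1 ?inE // => i /negbTE ->.
rewrite (eq_bigr _ (fun f _ => E f)).
have D : \sum_(d : T n) \prod_i G i (d i) = \prod_i \sum_c G i c := esym (bigA_distr_bigA G).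
rewrite D (bigD1 k) //=; congr (_ * _).
  by rewrite big_bool /G eqxx /= mulr1 mulr0 addr0.
by apply: eq_bigr => i /negbTE Hi; rewrite big_bool /G Hi /= !mulr1 addrC.
Qed.

Lemma influence_expand n (g : (nat -> R) -> R) (s : T n -> R)
  (Hs : forall f, s f ^+ 2 = 1)
  (H : forall d, g (ext d) = \sum_f s f * mono a f d) :
  influence n g = \sum_(k < n) a k.+1 ^+ 2 * \prod_(i < n | i != k) (1 + a i.+1 ^+ 2).
Proof.
rewrite /influence -(infl_sum n (fun i => a i ^+ 2)).
apply: eq_bigr => A _; rewrite (fcoef_expand H) exprMn Hs mul1r -prodrXl.
congr (_ * _); apply: eq_bigr => i _; by case: (i \in A); rewrite ?expr1n.
Qed.

End Aux2.

Theorem proposition2 (R : realFieldType) (a : nat -> R)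
  (ha : forall i, (1 <= i)%N -> 0 < a i <= 1) (n : nat) (hn : (1 <= n)%N) :
  influence n (Pn a n) =
    \sum_(1 <= i < n.+1) a i ^+ 2 * \prod_(1 <= j < n.+1 | j != i) (1 + a j ^+ 2) /\
  influence n (Qn a n) =
    \sum_(1 <= i < n.+1) a i ^+ 2 * \prod_(1 <= j < n.+1 | j != i) (1 + a j ^+ 2).
Proof.
have [sP [sQ [Hs He]]] := expand a n.
have Etarget : \sum_(1 <= i < n.+1) a i ^+ 2 * \prod_(1 <= j < n.+1 | j != i) (1 + a j ^+ 2)
   = \sum_(k < n) a k.+1 ^+ 2 * \prod_(i < n | i != k) (1 + a i.+1 ^+ 2).
  rewrite big_add1 /= big_mkord; apply: eq_bigr => k _.
  rewrite big_add1 /= big_mkord; congr (_ * _).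
rewrite Etarget; split.
  apply: (influence_expand (s := sP)); first by move=> f; case: (Hs f).
  by move=> d; case: (He d).
apply: (influence_expand (s := sQ)); first by move=> f; case: (Hs f).
by move=> d; case: (He d).
Qed.
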